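(* Let $G$ be a well-covered graph. Then every maximal induced bipartite subgraph of $G$ has the same weight, where the weight of a subgraph is twice its number of isolated vertices plus its number of non-isolated vertices.
   Context: All graphs are finite and simple; ''subgraph'' means induced subgraph, and a maximal bipartite subgraph is one maximal with respect to vertex inclusion among induced bipartite subgraphs. A graph is well-covered if every maximal independent set has the same cardinality. *)

(* Defs.v *)
From mathcomp Require Import all_boot.
Set Implicit Arguments. Unset Strict Implicit. Unset Printing Implicit Defensive.

Section Graphs.
Variable T : finType.
Variable e : rel T.

Definition simple_graph : Prop := symmetric e /\ irreflexive e.

Definition independent (S : {set T}) : bool :=
  [forall x in S, forall y in S, ~~ e x y].

Definition maximal_independent (S : {set T}) : bool :=
  maxset independent S.

Definition well_covered : Prop :=
  forall S1 S2 : {set T}, maximal_independent S1 -> maximal_independent S2 ->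
    #|S1| = #|S2|.

Definition induces_bipartite (S : {set T}) : bool :=
  [exists A : {set T}, (A \subset S) && independent A && independent (S :\: A)].

Definition maximal_bipartite (S : {set T}) : bool :=
  maxset induces_bipartite S.

Definition isolated_in (S : {set T}) : {set T} :=
  [set v in S | [forall u in S, ~~ e v u]].

Definition bip_weight (S : {set T}) : nat :=
  2 * #|isolated_in S| + #|S :\: isolated_in S|.

End Graphs.

(* Main.v *)
Require Import Defs.
From mathcomp Require Import all_boot.
From mathcomp Require Import zify.

Set Implicit Arguments. Unset Strict Implicit. Unset Printing Implicit Defensive.

Section Aux.
Variable T : finType.
Variable e : rel T.

Lemma indepP (S : {set T}) :
  reflect (forall x y, x \in S -> y \in S -> ~~ e x y) (independent e S).
Proof.
apply: (iffP forall_inP) => H.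
- by move=> x y xS yS; have /forall_inP := H x xS; apply.
- by move=> x xS; apply/forall_inP => y yS; apply: H.
Qed.

Lemma indep_sub (B C : {set T}) : independent e B -> C \subset B -> independent e C.
Proof.
move=> /indepP HB /subsetP CB; apply/indepP => x y xC yC.
by apply: HB; apply: CB.
Qed.

Lemma maxind (S X : {set T}) : symmetric e ->
  maximal_bipartite e S -> X \subset S -> independent e X ->
  independent e (S :\: X) -> maximal_independent e (X :|: isolated_in e S).
Proof.
move=> sym /maxsetP [_ Smax] /subsetP XS /indepP iX /indepP iSX.
have isoP v : v \in isolated_in e S -> v \in S /\ forall u, u \in S -> ~~ e v u.
  by rewrite inE => /andP [vS /forall_inP H].
have indM : independent e (X :|: isolated_in e S).
  apply/indepP => x y; rewrite !in_setU.
  case/orP => [xX|/isoP [xS Hx]]; case/orP => [yX|/isoP [yS Hy]].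
  - exact: iX.
  - by rewrite sym; apply: Hy; apply: XS.
  - by apply: Hx; apply: XS.
  - exact: Hx.
apply/maxsetP; split=> // B /indepP iB /subsetP MB.
apply/setP => v; apply/idP/idP; last by move/MB.
move=> vB; apply/negPn/negP => vM.
move: vM; rewrite in_setU negb_or => /andP [vX vI].
case vS: (v \in S).
- move: vI; rewrite inE vS /= negb_forall_in => /existsP [u /andP [uS /negPn evu]].
  case uX: (u \in X).
  + have uB : u \in B by apply: MB; rewrite in_setU uX.
    by move: (iB v u vB uB); rewrite evu.
  + have : ~~ e v u by apply: iSX; rewrite in_setD ?vX ?uX ?vS ?uS.
    by rewrite evu.
- have bip : induces_bipartite e (v |: S).
    apply/existsP; exists (v |: X); apply/andP; split; first (apply/andP; split).
    + by apply/subsetP => w; rewrite !in_setU1 => /orP [->|/XS ->] //; rewrite orbT.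
    + apply: (@indep_sub B); first by apply/indepP.
      apply/subsetP => w; rewrite in_setU1 => /orP [/eqP -> //|wX].
      by apply: MB; rewrite in_setU wX.
    + apply: (@indep_sub (S :\: X)); first by apply/indepP.
      apply/subsetP => w; rewrite !inE negb_or => /andP [/andP [wv wX] /orP [wv'|->]].
      * by rewrite wv' in wv.
      * by rewrite wX.
  have := Smax _ bip; rewrite subsetUr => /(_ isT) /setP /(_ v).
  by rewrite in_setU1 eqxx vS.
Qed.

Lemma count2 (S X I : {set T}) : X \subset S -> I \subset S ->
  #|X :|: I| + #|(S :\: X) :|: I| = 2 * #|I| + #|S :\: I|.
Proof.
move=> /subsetP XS /subsetP IS.
have E1 : #|X :|: I| = #|X :\: I| + #|I|.
  rewrite -(cardsID I (X :|: I)).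
  have -> : (X :|: I) :&: I = I by apply/setP => w; rewrite !inE; case: (w \in I); rewrite ?orbT ?andbF.
  have -> : (X :|: I) :\: I = X :\: I by apply/setP => w; rewrite !inE; case: (w \in I); rewrite ?orbF ?orbT.
  by rewrite addnC.
have E2 : #|(S :\: X) :|: I| = #|(S :\: X) :\: I| + #|I|.
  rewrite -(cardsID I ((S :\: X) :|: I)).
  have -> : ((S :\: X) :|: I) :&: I = I by apply/setP => w; rewrite !inE; case: (w \in I); rewrite ?orbT ?andbF.
  have -> : ((S :\: X) :|: I) :\: I = (S :\: X) :\: I by apply/setP => w; rewrite !inE; case: (w \in I); rewrite ?orbF ?orbT.
  by rewrite addnC.
have E3 : #|S :\: I| = #|X :\: I| + #|(S :\: X) :\: I|.
  rewrite -(cardsID X (S :\: I)).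
  have -> : (S :\: I) :&: X = X :\: I.
    apply/setP => w; rewrite !inE; case wX: (w \in X); rewrite ?andbF ?andbT //.
    by rewrite andbC XS // andbT.
  have -> : (S :\: I) :\: X = (S :\: X) :\: I.
    by apply/setP => w; rewrite !inE; case: (w \in X); case: (w \in I); case: (w \in S).
  by [].
rewrite E1 E2 E3; lia.
Qed.

Lemma weight_eq (S : {set T}) : symmetric e -> maximal_bipartite e S ->
  exists M1 M2, [/\ maximal_independent e M1, maximal_independent e M2 &
     bip_weight e S = #|M1| + #|M2|].
Proof.
move=> sym Smax.
have := Smax => /maxsetP [/existsP [A /andP [/andP [AS iA] iSA]] _].
exists (A :|: isolated_in e S), ((S :\: A) :|: isolated_in e S); split.
- exact: maxind.
- have EA : S :\: (S :\: A) = A.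
    apply/setP => w; rewrite !inE; have := subsetP AS w.
    by case: (w \in A); case: (w \in S) => //= /(_ isT).
  apply: (maxind sym Smax (subsetDl S A)) => //. by rewrite EA.
- rewrite count2 //; apply/subsetP => w; rewrite inE => /andP [] //.
Qed.

End Aux.

Theorem mainTheorem6 (T : finType) (e : rel T) :
  simple_graph e -> well_covered e ->
  forall S1 S2 : {set T}, maximal_bipartite e S1 -> maximal_bipartite e S2 ->
    bip_weight e S1 = bip_weight e S2.
Proof.
move=> [sym _] wc S1 S2 H1 H2.
have [M1 [M2 [m1 m2 ->]]] := weight_eq sym H1.
have [N1 [N2 [n1 n2 ->]]] := weight_eq sym H2.
by rewrite (wc _ _ m1 n1) (wc _ _ m2 n2).
Qed.
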